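(* Consider the $N$-node uplink system described in the context with weights $\omega_i>0$, arrival rates $\lambda_i\in(0,1]$ and success probabilities $p_i\in(0,1]$, and let $\lambda_{\min}=\min_i\lambda_i$. Let $(q^*_1,\dots,q^*_N)$ be an optimal solution of $$\min_{q_1,\dots,q_N>0}\ \frac{1}{2N}\sum_{i=1}^N\omega_i\left(\frac1{q_i}+3\right)\quad\text{s.t.}\quad\sum_{i=1}^N\frac{q_i}{p_i}\le1,\quad q_i\le\lambda_i\ \ \forall i,$$ and let $L_B=\frac{1}{2N}\sum_{i=1}^N\omega_i\left(\frac1{q^*_i}+3\right)$ be its optimal value. Let $R^{POMW}$ be the long-term expected weighted sum AoI of the POMW policy with parameters $\beta_i=\omega_i/(\lambda_iq^*_i)$. Then $$\frac{R^{POMW}}{L_B}<\frac{2}{\lambda_{\min}}.$$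
   Context: System: $N$ nodes $i=1,\dots,N$ and one access point (AP); time slots $t=0,1,2,\dots$. Node $i$ receives a status update in each slot independently with probability $\lambda_i$ (independent across nodes and slots) and keeps only the latest one. Local age: $d_{t+1,i}=1$ if an update arrives at node $i$ in slot $t$, else $d_{t+1,i}=d_{t,i}+1$. In each slot the AP schedules at most one node; a scheduled node $i$'s transmission succeeds with probability $p_i$ independently. If node $i$ is scheduled and succeeds in slot $t$, the AP observes $d_{t,i}$ and $D_{t+1,i}=d_{t,i}+1$; otherwise the AP observes nothing about $d_{t,i}$ and $D_{t+1,i}=D_{t,i}+1$. Initialization: $d_{0,i}=D_{0,i}=1$ for all $i$. Belief: $b_{t,i}(d)=\Pr(d_{t,i}=d\mid\text{AP history up to slot }t-1)$. POMW policy with parameters $\beta_i>0$: in each slot $t$ the AP computes $G_{t,i}=D_{t,i}-\sum_{d\ge1}b_{t,i}(d)\,d$ for every $i$ and schedules a node $j\in\arg\max_i\beta_ip_iG_{t,i}$. The long-term expected weighted sum AoI of a policy $\pi$ is $\lim_{T\to\infty}\frac{1}{NT}\mathbb{E}\left[\sum_{t=1}^T\sum_{i=1}^N\omega_iD_{t,i}\,\middle|\,\pi\right]$. *)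

(* Defs.v *)
From HB Require Import structures.
From mathcomp Require Import all_boot all_order all_algebra.
From mathcomp Require Import reals.
Set Implicit Arguments. Unset Strict Implicit. Unset Printing Implicit Defensive.
Import Order.TTheory GRing.Theory Num.Theory.
Local Open Scope ring_scope.

(* Probability model.  The randomness of one slot is, for every node i, an    *)
(* arrival bit (prob. lam i) and a transmission-success bit (prob. p i), all *)
(* independent; the success bit of node i is only used if i is scheduled.    *)
(* Events depending on slots 0..t-1 are evaluated on the finite space of     *)
(* t-tuples of slot outcomes with the product weight.                        *)
Section Model.
Variables (R : realType) (N : nat) (lam p : 'I_N -> R).

Definition slotT := {ffun 'I_N -> bool * bool}.  (* (arrival, success) *)
Definition slot0 : slotT := [ffun=> (false, false)].

Definition slot_w (x : slotT) : R :=
  \prod_(i < N) ((if (x i).1 then lam i else 1 - lam i) *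
                 (if (x i).2 then p i else 1 - p i)).

Definition path_w (s : seq slotT) : R := \prod_(x <- s) slot_w x.

(* local age d_{t,i} after the slots s = (slot 0, ..., slot t-1); d_0 = 1 *)
Definition loc_age (s : seq slotT) (i : 'I_N) : nat :=
  foldl (fun d (x : slotT) => if (x i).1 then 1%N else d.+1) 1%N s.

(* AP observation in one slot: (scheduled node, success, observed local age
   (0 = nothing observed, when the transmission failed)) *)
Definition obsT := ('I_N * bool * nat)%type.

(* AP age D_{t,i} from the AP history of slots 0..t-1; D_0 = 1 *)
Definition ap_age (h : seq obsT) (i : 'I_N) : nat :=
  foldl (fun D (o : obsT) => if (o.1.1 == i) && o.1.2 then o.2.+1 else D.+1)
        1%N h.

(* belief b_{t,i}(d) = Pr(d_{t,i} = d | AP history of slots 0..t-1 = h),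
   where H maps the first t slot outcomes to the AP history they produce *)
Definition belief (H : seq slotT -> seq obsT) (t : nat) (h : seq obsT)
  (i : 'I_N) (d : nat) : R :=
  (\sum_(s : t.-tuple slotT | H s == h) path_w s * (loc_age s i == d)%:R) /
  (\sum_(s : t.-tuple slotT | H s == h) path_w s).

(* sum_{d >= 1} b_{t,i}(d) d ; the belief is supported on 1 <= d <= t+1 *)
Definition belief_mean (H : seq slotT -> seq obsT) (t : nat) (h : seq obsT)
  (i : 'I_N) : R :=
  \sum_(1 <= d < t.+2) belief H t h i d * d%:R.

Variables (beta : 'I_N -> R) (tb : nat -> seq obsT -> ('I_N -> R) -> 'I_N).

(* POMW decision in slot t given the AP history h of slots 0..t-1;
   tb t h f is the (deterministic) tie-breaking choice of an argmax of f *)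
Definition pomw_index (H : seq slotT -> seq obsT) (t : nat) (h : seq obsT)
  (i : 'I_N) : R :=
  beta i * p i * ((ap_age h i)%:R - belief_mean H t h i).

Definition pomw_decide (H : seq slotT -> seq obsT) (t : nat) (h : seq obsT)
  : 'I_N := tb t h (pomw_index H t h).

(* AP history of slots 0..t-1 under POMW, as function of the slot outcomes *)
Fixpoint hist (t : nat) : seq slotT -> seq obsT :=
  match t with
  | 0 => fun _ => [::]
  | t'.+1 => fun s =>
      let h := hist t' (take t' s) in
      let j := pomw_decide (hist t') t' h in
      let x := nth slot0 s t' in
      let ok := (x j).2 in
      rcons h (j, ok, if ok then loc_age (take t' s) j else 0%N)
  end.

Definition pomw_cost (omega : 'I_N -> R) (T : nat) : R :=
  \sum_(s : T.-tuple slotT) path_w s *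
    \sum_(1 <= t < T.+1) \sum_(i < N) omega i * (ap_age (hist t (take t s)) i)%:R.

Definition pomw_avg (omega : 'I_N -> R) (T : nat) : R :=
  pomw_cost omega T / (N%:R * T%:R).

End Model.

Definition lb_obj {R : realType} {N : nat} (omega q : 'I_N -> R) : R :=
  (2 * N%:R)^-1 * \sum_(i < N) omega i * ((q i)^-1 + 3).

Definition lb_feasible {R : realType} {N : nat} (lam p q : 'I_N -> R) : Prop :=
  (forall i, 0 < q i) /\ \sum_(i < N) q i / p i <= 1 /\ (forall i, q i <= lam i).

(* lambda_min = min_i lam_i (the seed 1 is harmless since all lam_i <= 1) *)
Definition lam_min {R : realType} {N : nat} (lam : 'I_N -> R) : R :=
  \big[Num.min/1]_(i < N) lam i.

(* Main.v *)
Require Import Defs.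
From HB Require Import structures.
From mathcomp Require Import all_boot all_order all_algebra.
From mathcomp Require Import reals.
From mathcomp Require Import ring lra.
Set Implicit Arguments. Unset Strict Implicit. Unset Printing Implicit Defensive.
Import Order.TTheory GRing.Theory Num.Theory.
Local Open Scope ring_scope.
Section S.
Variables (R : realType) (N : nat) (lam p : 'I_N -> R).
Hypothesis hlam : forall i, 0 <= lam i <= 1.
Hypothesis hp : forall i, 0 <= p i <= 1.

Definition wk (i : 'I_N) (b : bool * bool) : R :=
  (if b.1 then lam i else 1 - lam i) * (if b.2 then p i else 1 - p i).

Lemma wk_ge0 i b : 0 <= wk i b.
Proof.
have /andP[l0 l1] := hlam i; have /andP[p0 p1] := hp i.
rewrite /wk; case: b => [[] []] /=; apply: mulr_ge0; rewrite ?subr_ge0 //.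
Qed.

Lemma sum_wk i (f : bool * bool -> R) :
  \sum_(b : bool * bool) wk i b * f b =
  lam i * p i * f (true, true) + lam i * (1 - p i) * f (true, false)
  + (1 - lam i) * p i * f (false, true) + (1 - lam i) * (1 - p i) * f (false, false).
Proof.
rewrite (eq_bigr (fun b => wk i (b.1, b.2) * f (b.1, b.2))); last by case.
rewrite -(pair_bigA _ (fun a b => wk i (a, b) * f (a, b))) /=.
rewrite !big_bool /= /wk /=. by rewrite !addrA.
Qed.

Lemma sum_wk1 i : \sum_(b : bool * bool) wk i b = 1.
Proof.
have := sum_wk i (fun _ => 1); under eq_bigr do rewrite mulr1.
move=> ->; rewrite !mulr1; ring.
Qed.

Lemma slot_marg i (f : bool * bool -> R) :
  \sum_(x : slotT N) slot_w lam p x * f (x i) = \sum_(b : bool * bool) wk i b * f b.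
Proof.
transitivity (\sum_(x : slotT N) \prod_(k < N) (wk k (x k) * (if k == i then f (x k) else 1))).
  apply: eq_bigr => x _; rewrite [RHS]big_split /=.
  rewrite [X in _ = _ * X](bigD1 i) //= eqxx.
  rewrite [X in _ = _ * (_ * X)]big1 ?mulr1 //; last by move=> k /negbTE ->.
rewrite -(bigA_distr_bigA (fun k b => wk k b * (if k == i then f b else 1))) /=.
rewrite (bigD1 i) //= [X in _ * X]big1 ?mulr1.
  by apply: eq_bigr => b _; rewrite eqxx.
move=> k /negbTE ->; under eq_bigr do rewrite mulr1.
exact: sum_wk1.
Qed.

Lemma slot_sum1 : \sum_(x : slotT N) slot_w lam p x = 1.
Proof.
rewrite (eq_bigr (fun x : slotT N => \prod_(k < N) wk k (x k))) //.
rewrite -(bigA_distr_bigA wk) /=.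
by rewrite big1 // => k _; exact: sum_wk1.
Qed.


Definition Ex t (g : seq (slotT N) -> R) : R :=
  \sum_(s : t.-tuple (slotT N)) path_w lam p s * g s.

Lemma sum_tuple_rcons t (F : seq (slotT N) -> R) :
  \sum_(u : t.+1.-tuple (slotT N)) F u =
  \sum_(s : t.-tuple (slotT N)) \sum_(x : slotT N) F (rcons s x).
Proof.
rewrite pair_bigA /=.
pose h (sx : t.-tuple (slotT N) * slotT N) : t.+1.-tuple (slotT N) :=
  [tuple of rcons sx.1 sx.2].
pose g (u : t.+1.-tuple (slotT N)) : t.-tuple (slotT N) * slotT N :=
  ([tuple of belast (thead u) (behead_tuple u)], last (thead u) (behead u)).
rewrite (reindex h) /=; last first.
  exists g => [[s x] _|u _].
    rewrite /g /h /=. 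
    have E : thead [tuple of rcons s x] :: behead [tuple of rcons s x] = rcons s x.
      by symmetry; exact: (congr1 val (tuple_eta [tuple of rcons s x])).
    move: E; rewrite lastI => /rcons_inj [E1 E2].
    by congr pair; [apply: val_inj; rewrite /= E1 | rewrite E2].
  apply: val_inj; rewrite /h /g /= -lastI.
  by symmetry; exact: (congr1 val (tuple_eta u)).
by [].
Qed.

Lemma Ex_split t g : Ex t.+1 g =
  Ex t (fun s => \sum_(x : slotT N) slot_w lam p x * g (rcons s x)).
Proof.
rewrite /Ex (sum_tuple_rcons t (fun u => path_w lam p u * g u)); apply: eq_bigr => s _.
rewrite mulr_sumr; apply: eq_bigr => x _.
by rewrite /path_w -cats1 big_cat big_seq1 /= mulrA.
Qed.

Lemma Ex0 g : Ex 0 g = g [::].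
Proof.
rewrite /Ex (big_pred1 [tuple]) /=; first by rewrite /path_w big_nil mul1r.
by move=> u; rewrite (tuple0 u) /= eqxx.
Qed.


Lemma path_w_ge0 s : 0 <= path_w lam p s.
Proof.
rewrite /path_w; apply: prodr_ge0 => x _; apply: prodr_ge0 => k _; exact: wk_ge0.
Qed.

Lemma Ex_ext t g1 g2 : (forall s, size s = t -> g1 s = g2 s) -> Ex t g1 = Ex t g2.
Proof. by move=> H; apply: eq_bigr => s _; rewrite H // size_tuple. Qed.

Lemma Ex_le t g1 g2 : (forall s, size s = t -> g1 s <= g2 s) -> Ex t g1 <= Ex t g2.
Proof.
move=> H; apply: ler_sum => s _; apply: ler_wpM2l; first exact: path_w_ge0.
by rewrite H // size_tuple.
Qed.

Lemma ExD t g1 g2 : Ex t (fun s => g1 s + g2 s) = Ex t g1 + Ex t g2.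
Proof. by rewrite /Ex -big_split; apply: eq_bigr => s _; rewrite mulrDr. Qed.

Lemma ExB t g1 g2 : Ex t (fun s => g1 s - g2 s) = Ex t g1 - Ex t g2.
Proof. by rewrite /Ex -sumrB; apply: eq_bigr => s _; rewrite mulrBr. Qed.

Lemma ExZ t c g : Ex t (fun s => c * g s) = c * Ex t g.
Proof. by rewrite /Ex mulr_sumr; apply: eq_bigr => s _; rewrite mulrCA. Qed.

Lemma Ex_sum t (G : 'I_N -> seq (slotT N) -> R) :
  Ex t (fun s => \sum_(i < N) G i s) = \sum_(i < N) Ex t (G i).
Proof.
rewrite /Ex exchange_big /=; apply: eq_bigr => s _; by rewrite mulr_sumr.
Qed.

Lemma Ex_const t c : Ex t (fun _ => c) = c.
Proof.
elim: t => [|t IH]; first by rewrite Ex0.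
rewrite Ex_split -[RHS]IH; apply: Ex_ext => s _.
by rewrite -mulr_suml slot_sum1 mul1r.
Qed.

Lemma Ex_ge0 t g : (forall s, size s = t -> 0 <= g s) -> 0 <= Ex t g.
Proof. by move=> H; rewrite -(Ex_const t 0); apply: Ex_le. Qed.

Lemma loc_age_rcons (s : seq (slotT N)) x (i : 'I_N) :
  loc_age (rcons s x) i = if (x i).1 then 1%N else (loc_age s i).+1.
Proof. by rewrite /loc_age foldl_rcons. Qed.

Lemma ap_age_rcons (h : seq (obsT N)) o i :
  ap_age (rcons h o) i = if (o.1.1 == i) && o.1.2 then o.2.+1 else (ap_age h i).+1.
Proof. by rewrite /ap_age foldl_rcons. Qed.

Lemma loc_age_bnd (s : seq (slotT N)) (i : 'I_N) : (1 <= loc_age s i <= (size s).+1)%N.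
Proof.
elim/last_ind: s => [|s x IH] //.
rewrite loc_age_rcons size_rcons; case: ((x i).1) => //.
by move: IH => /andP[_ H]; rewrite /= ltnS H.
Qed.

Lemma Ex_loc_age t i : 0 < lam i ->
  Ex t (fun s => (loc_age s i)%:R) <= (lam i)^-1.
Proof.
move=> l0; elim: t => [|t IH].
  rewrite Ex0 /loc_age /= invr_ge1 //; first by have /andP[] := hlam i.
  by rewrite unitfE gt_eqF.
rewrite Ex_split.
have E : forall s, size s = t -> \sum_(x : slotT N) slot_w lam p x * (loc_age (rcons s x) i)%:R
   = 1 + (1 - lam i) * (loc_age s i)%:R.
  move=> s _.
  have := slot_marg i (fun b : bool * bool => (if b.1 then 1%N else (loc_age s i).+1)%:R : R).
  under [in X in X = _ -> _]eq_bigr do rewrite -loc_age_rcons.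
  move=> ->; rewrite sum_wk /= -natr1; ring.
rewrite (Ex_ext (g2 := fun s => 1 + (1 - lam i) * (loc_age s i)%:R)) //.
rewrite ExD Ex_const ExZ.
have /andP[_ l1] := hlam i.
have : (1 - lam i) * Ex t (fun s => (loc_age s i)%:R) <= (1 - lam i) * (lam i)^-1.
  by apply: ler_wpM2l; rewrite ?subr_ge0.
move=> Hle.
have E2 : (lam i)^-1 = 1 + (1 - lam i) * (lam i)^-1 by field; rewrite gt_eqF.
by rewrite [X in _ <= X]E2 lerD2l.
Qed.


Lemma sum_ind t (L : nat) : (1 <= L <= t.+1)%N ->
  \sum_(1 <= d < t.+2) (L == d)%:R * (d%:R : R) = L%:R.
Proof.
move=> hL; rewrite (bigD1_seq L) /=; last by have := iota_uniq 1 t.+1.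
  rewrite eqxx mul1r big1 ?addr0 // => d /negbTE; rewrite eq_sym => ->.
  by rewrite mul0r.
by rewrite mem_index_iota ltnS.
Qed.

Lemma tower (Hf : seq (slotT N) -> seq (obsT N)) t i (phi : seq (obsT N) -> R) :
  Ex t (fun s => phi (Hf s) * belief_mean lam p Hf t (Hf s) i) =
  Ex t (fun s => phi (Hf s) * (loc_age s i)%:R).
Proof.
rewrite /Ex.
pose W := fun h => \sum_(s : t.-tuple (slotT N) | Hf s == h) path_w lam p s.
have bmE : forall h, belief_mean lam p Hf t h i =
   (\sum_(s : t.-tuple (slotT N) | Hf s == h) path_w lam p s * (loc_age s i)%:R) / W h.
  move=> h; rewrite /belief_mean /belief.
  under eq_bigr do rewrite mulrAC.
  rewrite -mulr_suml; congr (_ / _).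
  under eq_bigr do rewrite mulr_suml.
  rewrite exchange_big /=; apply: eq_bigr => s _.
  under eq_bigr do rewrite -mulrA.
  rewrite -mulr_sumr sum_ind //.
  by have := loc_age_bnd s i; rewrite size_tuple.
transitivity (\sum_(s : t.-tuple (slotT N)) \sum_(s' : t.-tuple (slotT N))
   (Hf s' == Hf s)%:R * (path_w lam p s * phi (Hf s) *
      (path_w lam p s' * (loc_age s' i)%:R) / W (Hf s))).
  apply: eq_bigr => s _; rewrite bmE big_mkcond /= !mulr_suml !mulr_sumr.
  apply: eq_bigr => s' _; case: (Hf s' == Hf s); rewrite ?mul1r ?mul0r ?mulr0 //.
  by rewrite !mulrA.
rewrite exchange_big; apply: eq_bigr => s' _ /=.
transitivity (\sum_(s : t.-tuple (slotT N)) (Hf s == Hf s')%:R * path_w lam p s *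
   (phi (Hf s') * (path_w lam p s' * (loc_age s' i)%:R) / W (Hf s'))).
  apply: eq_bigr => s _; case: (eqVneq (Hf s) (Hf s')) => [E|ne].
    by rewrite E /= !mul1r !mulrA.
  by rewrite /= !mul0r.
rewrite -mulr_suml.
have -> : \sum_(s : t.-tuple (slotT N)) (Hf s == Hf s')%:R * path_w lam p s = W (Hf s').
  rewrite /W [RHS]big_mkcond; apply: eq_bigr => s _.
  by case: (Hf s == Hf s'); rewrite ?mul1r ?mul0r.
have Wge : path_w lam p s' <= W (Hf s').
  rewrite /W (bigD1 s') ?eqxx //= lerDl; apply: sumr_ge0 => s _; exact: path_w_ge0.
have [W0|Wn0] := eqVneq (W (Hf s')) 0.
  have w0 : path_w lam p s' = 0.
    by apply/eqP; rewrite eq_le path_w_ge0 -W0 Wge.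
  by rewrite W0 w0 !mul0r ?mulr0.
by field.
Qed.

Variables (beta : 'I_N -> R) (tb : nat -> seq (obsT N) -> ('I_N -> R) -> 'I_N).

Notation H t := (hist lam p beta tb t).
Notation jdec t s := (pomw_decide lam p beta tb (H t) t (H t s)).

Lemma hist_rcons t (s : seq (slotT N)) x : size s = t ->
  H t.+1 (rcons s x) = rcons (H t s)
    (jdec t s, (x (jdec t s)).2,
     if (x (jdec t s)).2 then loc_age s (jdec t s) else 0%N).
Proof.
move=> Hs /=.
have -> : take t (rcons s x) = s by rewrite -cats1 take_size_cat.
by rewrite nth_rcons Hs ltnn eqxx.
Qed.

Lemma loc_le_ap (s : seq (slotT N)) i : (loc_age s i <= ap_age (H (size s) s) i)%N.
Proof.
elim/last_ind: s => [|s x IH] //.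
rewrite size_rcons hist_rcons // ap_age_rcons loc_age_rcons /=.
case: ((x i).1); first by case: ifP.
case: eqP => [E|_] /=; last by [].
rewrite E; case: ((x i).2) => //.
Qed.

Definition Dap t (s : seq (slotT N)) i : R := (ap_age (H t s) i)%:R.
Definition Lo (s : seq (slotT N)) i : R := (loc_age s i)%:R.
Definition V t s := \sum_(i < N) beta i * Dap t s i.
Definition fidx t h := pomw_index lam p beta (H t) t h.
Definition M t h := fidx t h (pomw_decide lam p beta tb (H t) t h).

Lemma drift_i t s i : size s = t ->
  \sum_(x : slotT N) slot_w lam p x * Dap t.+1 (rcons s x) i =
  Dap t s i + 1 - (jdec t s == i)%:R * p i * (Dap t s i - Lo s i).
Proof.
move=> Hs; rewrite /Dap.
under eq_bigr do rewrite hist_rcons // ap_age_rcons /=.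
case: (eqVneq (jdec t s) i) => [E|ne].
  rewrite E /=.
  have := slot_marg i (fun b : bool * bool =>
    (if b.2 then (loc_age s i).+1 else (ap_age (H t s) i).+1)%:R : R).
  rewrite sum_wk /= => E2.
  rewrite (eq_bigr (fun x => slot_w lam p x * (if (x i).2 then (loc_age s i).+1
     else (ap_age (H t s) i).+1)%:R)); last by move=> x _; case: ((x i).2).
  rewrite E2 /Lo -!natr1; ring.
rewrite /= -mulr_suml slot_sum1 mul1r -natr1; ring.
Qed.

Lemma drift t : Ex t.+1 (V t.+1) =
  Ex t (V t) + \sum_(i < N) beta i - Ex t (fun s => M t (H t s)).
Proof.
rewrite Ex_split.
rewrite (Ex_ext (g2 := fun s => V t s + \sum_(i < N) beta i -
    \sum_(i < N) ((jdec t s == i)%:R * beta i * p i) * (Dap t s i - Lo s i))); last first.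
  move=> s Hs; rewrite /V.
  under eq_bigr do rewrite mulr_sumr.
  rewrite exchange_big /=.
  under eq_bigr do (under eq_bigr do rewrite mulrCA; rewrite -mulr_sumr drift_i //).
  rewrite -big_split -sumrB /=; apply: eq_bigr => i _; ring.
rewrite ExB ExD Ex_const; congr (_ - _).
rewrite Ex_sum.
transitivity (\sum_(i < N) Ex t (fun s =>
   (jdec t s == i)%:R * beta i * p i * (Dap t s i - belief_mean lam p (H t) t (H t s) i))).
  apply: eq_bigr => i _.
  rewrite (Ex_ext (g2 := fun s => (jdec t s == i)%:R * beta i * p i * Dap t s i -
       (jdec t s == i)%:R * beta i * p i * Lo s i)); last by move=> s _; rewrite mulrBr.
  rewrite [RHS](Ex_ext (g2 := fun s => (jdec t s == i)%:R * beta i * p i * Dap t s i -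
       (jdec t s == i)%:R * beta i * p i * belief_mean lam p (H t) t (H t s) i));
     last by move=> s _; rewrite mulrBr.
  rewrite !ExB; congr (_ - _).
  by rewrite /Lo (tower (H t) t i (fun h => (pomw_decide lam p beta tb (H t) t h == i)%:R * beta i * p i)).
rewrite -Ex_sum; apply: Ex_ext => s _.
rewrite /M /fidx /pomw_index (bigD1 (jdec t s)) //= eqxx mul1r big1 ?addr0.
  by [].
by move=> k /negbTE; rewrite eq_sym => ->; rewrite !mul0r.
Qed.

Lemma Ex_sum_seq t (I : Type) (r : seq I) (G : I -> seq (slotT N) -> R) :
  Ex t (fun s => \sum_(j <- r) G j s) = \sum_(j <- r) Ex t (G j).
Proof.
rewrite /Ex exchange_big /=; apply: eq_bigr => s _; by rewrite mulr_sumr.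
Qed.

Lemma marg t T g : (t <= T)%N -> Ex T (fun s => g (take t s)) = Ex t g.
Proof.
elim: T => [|T IH].
  by rewrite leqn0 => /eqP ->; apply: Ex_ext => s /size0nil ->.
rewrite leq_eqVlt => /orP[/eqP ->|].
  by apply: Ex_ext => s Hs; rewrite take_oversize // Hs.
rewrite ltnS => htT; rewrite Ex_split -IH //; apply: Ex_ext => s Hs.
under eq_bigr do rewrite -cats1 takel_cat ?Hs //.
by rewrite -mulr_suml slot_sum1 mul1r.
Qed.

Section Main.
Variables (omega q : 'I_N -> R).
Hypothesis hom : forall i, 0 < omega i.
Hypothesis hlam0 : forall i, 0 < lam i.
Hypothesis hp0 : forall i, 0 < p i.
Hypothesis hq : forall i, 0 < q i.
Hypothesis hsum : \sum_(i < N) q i / p i <= 1.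
Hypothesis hbeta : forall i, beta i = omega i / (lam i * q i).
Hypothesis htb : forall t h (f : 'I_N -> R) j, f j <= f (tb t h f).
Hypothesis hN : (0 < N)%N.

Definition X t := \sum_(k < N) omega k * Ex t (fun s => Dap t s k).
Definition Asum := \sum_(i < N) beta i.
Definition Bsum := \sum_(i < N) omega i / lam i.

Lemma beta_ge0 i : 0 <= beta i.
Proof. by rewrite hbeta; apply: divr_ge0; [exact: ltW | apply: mulr_ge0; exact: ltW]. Qed.

Lemma G_ge0 t k : 0 <= Ex t (fun s => Dap t s k - Lo s k).
Proof.
apply: Ex_ge0 => s Hs; rewrite subr_ge0 /Dap /Lo ler_nat -Hs; exact: loc_le_ap.
Qed.

Lemma fidx_E t k : Ex t (fun s => fidx t (H t s) k) =
  beta k * p k * Ex t (fun s => Dap t s k - Lo s k).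
Proof.
rewrite /fidx /pomw_index.
rewrite (Ex_ext (g2 := fun s => beta k * p k * Dap t s k -
   beta k * p k * belief_mean lam p (H t) t (H t s) k)); last by move=> s _; rewrite mulrBr.
rewrite ExB [in RHS]ExB mulrBr -!ExZ; congr (_ - _).
by have := tower (H t) t k (fun _ => beta k * p k).
Qed.

Lemma EM_ge t : \sum_(k < N) omega k / lam k * Ex t (fun s => Dap t s k - Lo s k)
   <= Ex t (fun s => M t (H t s)).
Proof.
have Mge : forall k, beta k * p k * Ex t (fun s => Dap t s k - Lo s k) <= Ex t (fun s => M t (H t s)).
  move=> k; rewrite -fidx_E; apply: Ex_le => s _; exact: htb.
have M0 : 0 <= Ex t (fun s => M t (H t s)).
  apply: le_trans (Mge (Ordinal hN)); apply: mulr_ge0; last exact: G_ge0.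
  by apply: mulr_ge0; [exact: beta_ge0 | exact: ltW].
apply: le_trans (_ : \sum_(k < N) q k / p k * Ex t (fun s => M t (H t s)) <= _).
  apply: ler_sum => k _.
  have -> : omega k / lam k = q k / p k * (beta k * p k).
    rewrite hbeta; field.
    by rewrite !gt_eqF.
  rewrite -mulrA; apply: ler_wpM2l; last exact: Mge.
  by apply: divr_ge0; exact: ltW.
rewrite -mulr_suml; rewrite -[X in _ <= X]mul1r; exact: ler_wpM2r.
Qed.

Lemma stepX t : X t <= Ex t (V t) - Ex t.+1 (V t.+1) + Asum + Bsum.
Proof.
have EM : Ex t (fun s => M t (H t s)) = Ex t (V t) - Ex t.+1 (V t.+1) + Asum.
  rewrite drift /Asum; ring.
rewrite -EM.
apply: le_trans (_ : \sum_(k < N) omega k / lam k * Ex t (fun s => Dap t s k - Lo s k)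
   + Bsum <= _); last by rewrite lerD2r; exact: EM_ge.
rewrite /X /Bsum -big_split /=; apply: ler_sum => k _.
have -> : Ex t (fun s => Dap t s k) = Ex t (fun s => Dap t s k - Lo s k) + Ex t (fun s => Lo s k).
  by rewrite -ExD; apply: Ex_ext => s _; rewrite subrK.
rewrite mulrDr; apply: lerD.
  apply: ler_wpM2r; first exact: G_ge0.
  rewrite ler_pdivlMr //; apply: ler_piMr; first exact: ltW.
  by have /andP[] := hlam k.
apply: ler_wpM2l; first exact: ltW.
exact: Ex_loc_age.
Qed.

Lemma V_ge0 t : 0 <= Ex t (V t).
Proof.
apply: Ex_ge0 => s _; apply: sumr_ge0 => i _; apply: mulr_ge0; first exact: beta_ge0.
exact: ler0n.
Qed.

Lemma V0 : Ex 0 (V 0) = Asum.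
Proof. by rewrite Ex0 /V /Asum; apply: eq_bigr => i _; rewrite /Dap /= mulr1. Qed.

Lemma X_ge0 t : 0 <= X t.
Proof.
apply: sumr_ge0 => k _; apply: mulr_ge0; first exact: ltW.
apply: Ex_ge0 => s _; exact: ler0n.
Qed.

Lemma sumX T : \sum_(0 <= t < T.+1) X t <=
  Asum - Ex T.+1 (V T.+1) + T.+1%:R * (Asum + Bsum).
Proof.
elim: T => [|T IH].
  rewrite big_nat1; apply: le_trans (stepX 0) _; rewrite V0; lra.
rewrite big_nat_recr //=; apply: le_trans (lerD IH (stepX T.+1)) _.
rewrite -[T.+2%:R](natr1 (R:=R)); lra.
Qed.

Lemma cost_eq T : pomw_cost lam p beta tb omega T = \sum_(1 <= t < T.+1) X t.
Proof.
rewrite /pomw_cost.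
change (Ex T (fun s => \sum_(1 <= t < T.+1) \sum_(i < N) omega i * Dap t (take t s) i) = \sum_(1 <= t < T.+1) X t).
rewrite Ex_sum_seq big_seq [RHS]big_seq; apply: eq_bigr => t.
rewrite mem_index_iota ltnS => /andP[_ htT].
rewrite Ex_sum /X; apply: eq_bigr => i _.
rewrite ExZ; congr (_ * _).
exact: (marg (fun s => Dap t s i) htT).
Qed.

Lemma avg_bound T : (0 < T)%N ->
  pomw_avg lam p beta tb omega T <=
  (Asum + T.+1%:R * (Asum + Bsum)) / (N%:R * T%:R).
Proof.
move=> hT; rewrite /pomw_avg; apply: ler_wpM2r.
  by rewrite invr_ge0 mulr_ge0 // ler0n.
rewrite cost_eq.
apply: le_trans (_ : \sum_(0 <= t < T.+1) X t <= _).
  by rewrite [X in _ <= X]big_ltn // lerDr X_ge0.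
apply: le_trans (sumX T) _; rewrite lerD2r gerBl; exact: V_ge0.
Qed.

End Main.

End S.

Theorem corollary2 (R : realType) (N : nat) (omega lam p qs : 'I_N -> R)
  (tb : nat -> seq (obsT N) -> ('I_N -> R) -> 'I_N) :
  (0 < N)%N ->
  (forall i, 0 < omega i) ->
  (forall i, 0 < lam i <= 1) ->
  (forall i, 0 < p i <= 1) ->
  lb_feasible lam p qs ->
  (forall q, lb_feasible lam p q -> lb_obj omega qs <= lb_obj omega q) ->
  (forall t h (f : 'I_N -> R) j, f j <= f (tb t h f)) ->
  exists c : R,
    c / lb_obj omega qs < 2 / lam_min lam /\
    exists T0 : nat, forall T : nat, (T0 <= T)%N ->
      pomw_avg lam p (fun i => omega i / (lam i * qs i)) tb omega T <= c.
Proof.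
move=> hN hom hlam hp [hq [hsum _]] _ htb.
set beta := fun i => omega i / (lam i * qs i).
have hlam' : forall i, 0 <= lam i <= 1.
  by move=> i; have /andP[a b] := hlam i; rewrite b ltW.
have hp' : forall i, 0 <= p i <= 1.
  by move=> i; have /andP[a b] := hp i; rewrite b ltW.
have hlam0 : forall i, 0 < lam i by move=> i; have /andP[] := hlam i.
have hp0 : forall i, 0 < p i by move=> i; have /andP[] := hp i.
set lm := lam_min lam.
have lm_pos : 0 < lm.
  rewrite /lm /lam_min; apply: (big_ind (fun x => 0 < x)) => //.
  by move=> x y hx hy; rewrite lt_min hx hy.
have lm_le : forall i, lm <= lam i.
  move=> i; rewrite /lm /lam_min (bigD1 i) //= ge_min lexx //.
set A := Asum beta.
set B := Bsum lam omega.
set W := \sum_(i < N) omega i.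
set Sq := \sum_(i < N) omega i * (qs i)^-1.
have W_pos : 0 < W.
  rewrite /W (bigD1 (Ordinal hN)) //=; apply: ltr_wpDr; last exact: hom.
  by apply: sumr_ge0 => i _; exact: ltW.
have A_le : A <= Sq / lm.
  rewrite /A /Asum /Sq mulr_suml; apply: ler_sum => i _.
  rewrite /beta invfM mulrA mulrAC; apply: ler_wpM2l.
    by apply: mulr_ge0; [exact: ltW | rewrite invr_ge0 ltW].
  by rewrite lef_pV2 ?posrE.
have B_le : B <= W / lm.
  rewrite /B /Bsum /W mulr_suml; apply: ler_sum => i _.
  apply: ler_wpM2l; first exact: ltW.
  by rewrite lef_pV2 ?posrE.
set u := W / lm.
have u_pos : 0 < u by rewrite /u divr_gt0.
exists ((A + B + u) / N%:R); split.
  have N_pos : 0 < N%:R :> R by rewrite ltr0n.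
  have L_eq : lb_obj omega qs = (2 * N%:R)^-1 * (Sq + 3 * W).
    rewrite /lb_obj; congr (_ * _); rewrite /Sq /W mulr_sumr -big_split /=.
    by apply: eq_bigr => i _; rewrite mulrDr [omega i * 3]mulrC.
  have L_pos : 0 < lb_obj omega qs.
    rewrite L_eq; apply: mulr_gt0; first by rewrite invr_gt0 mulr_gt0.
    apply: ltr_wpDl; last by rewrite mulr_gt0.
    rewrite /Sq; apply: sumr_ge0 => i _; apply: mulr_ge0; first exact: ltW.
    by rewrite invr_ge0 ltW.
  rewrite ltr_pdivrMr // L_eq.
  have -> : 2 / lm * ((2 * N%:R)^-1 * (Sq + 3 * W)) = (Sq / lm + 3 * u) / N%:R.
    rewrite /u; field; rewrite ?gt_eqF //.
  rewrite ltr_pM2r ?invr_gt0 //.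
  have B_le' : B <= u by []. lra.
pose Z := (2 * A + B) / u.
have Z_ge0 : 0 <= Z.
  apply: divr_ge0; last exact: ltW.
  have A0 : 0 <= A by rewrite /A /Asum; apply: sumr_ge0 => i _; rewrite /beta divr_ge0 ?ltW // mulr_gt0.
  have B0 : 0 <= B by rewrite /B /Bsum; apply: sumr_ge0 => i _; rewrite divr_ge0 ?ltW.
  lra.
exists (Num.Def.archi_bound Z).+1 => T hT.
have T_pos : (0 < T)%N by apply: leq_trans hT.
have TZ : Z < T%:R.
  apply: lt_le_trans (archi_boundP Z_ge0) _; rewrite ler_nat; exact: ltnW.
apply: le_trans (avg_bound hlam' hp' hom hlam0 hp0 hq hsum (fun i => erefl (beta i)) htb hN T_pos) _.
have NT_pos : 0 < N%:R * T%:R :> R by rewrite mulr_gt0 ?ltr0n.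
rewrite ler_pdivrMr //.
have -> : (A + B + u) / N%:R * (N%:R * T%:R) = (A + B + u) * T%:R.
  by field; rewrite gt_eqF ?ltr0n ?mulr_gt0 ?ltr0n.
have key : 2 * A + B <= T%:R * u.
  have : Z * u <= T%:R * u by rewrite ler_wpM2r ?ltW.
  by rewrite /Z divfK ?gt_eqF.
change (A + T.+1%:R * (A + B) <= (A + B + u) * T%:R).
rewrite -natr1. nra.
Qed.
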